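(* For every $n\ge1$, the coordinates $(p_j,u_j)$ of the trajectory $T_n$ satisfy: (a) $p_ju_j<1$ for $0\le j\le n$; (b) $p_j\ge1$ for $0\le j\le (n-1)/2$, and $u_j\ge1$ for $(n+1)/2\le j\le n$; (c) $u_j<1$ for $0\le j\le n/2$, and $p_j<1$ for $n/2\le j\le n$.
   Context: $\Phi$ is the partial map of $\mathbb{R}^2$ defined for $p\ne0$ by $\Phi(p,u)=\bigl(p^2(u+1)-1,\ 1/p\bigr)$. For $n\ge1$, the trajectory $T_n$ is the (existing and unique) finite sequence $(p_j,u_j)$, $j=0,\dots,n$, with $(p_j,u_j)=\Phi(p_{j-1},u_{j-1})$ for $1\le j\le n$, $u_0=0$, $p_n=0$, and $p_j>0$ for $0\le j\le n-1$. *)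

(* Defs.v *)
From Stdlib Require Import Reals Lra Lia.
Open Scope R_scope.

Definition Phi (pu : R * R) : R * R :=
  let (p, u) := pu in (p ^ 2 * (u + 1) - 1, / p).

Definition is_trajectory (n : nat) (p u : nat -> R) : Prop :=
  u 0%nat = 0 /\
  p n = 0 /\
  (forall j : nat, (j <= n - 1)%nat -> 0 < p j) /\
  (forall j : nat, (1 <= j <= n)%nat -> (p j, u j) = Phi (p (j - 1)%nat, u (j - 1)%nat)).

(* Main.v *)
Require Import Defs.
From Stdlib Require Import Reals.
From Stdlib Require Import Lra Lia Psatz.
Open Scope R_scope.

Lemma tr_step n p u : is_trajectory n p u -> forall k, (k < n)%nat ->
  p (S k) = p k ^ 2 * (u k + 1) - 1 /\ u (S k) = / p k.
Proof.
  intros [H0 [Hn [Hpos Hrec]]] k Hk.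
  specialize (Hrec (S k) ltac:(lia)).
  replace (S k - 1)%nat with k in Hrec by lia.
  unfold Phi in Hrec. injection Hrec; auto.
Qed.

Lemma tr_pos n p u : is_trajectory n p u -> forall k, (k < n)%nat -> 0 < p k.
Proof. intros [_ [_ [Hpos _]]] k Hk. apply Hpos; lia. Qed.

Lemma tr_u_nonneg n p u : is_trajectory n p u -> forall k, (k <= n)%nat -> 0 <= u k.
Proof.
  intros T k Hk. destruct k.
  - destruct T as [H0 _]. rewrite H0; lra.
  - destruct (tr_step n p u T k ltac:(lia)) as [_ ->].
    left; apply Rinv_0_lt_compat; apply (tr_pos n p u T); lia.
Qed.

Lemma tr_w_step n p u : is_trajectory n p u -> forall k, (k < n)%nat ->
  p (S k) * u (S k) = p k * u k + p k - / p k.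
Proof.
  intros T k Hk. destruct (tr_step n p u T k Hk) as [-> ->].
  pose proof (tr_pos n p u T k Hk). field. lra.
Qed.

Lemma tr_forward n p u : is_trajectory n p u -> forall k, (k <= n)%nat ->
  1 <= p k -> 1 <= p k * u k -> False.
Proof.
  intros T k Hk H1 H2.
  assert (forall d, (k + d <= n)%nat -> 1 <= p (k + d)%nat /\ 1 <= p (k+d)%nat * u (k+d)%nat).
  { induction d; intros Hd.
    - rewrite Nat.add_0_r; auto.
    - destruct (IHd ltac:(lia)) as [A B].
      replace (k + S d)%nat with (S (k + d)) by lia.
      rewrite (tr_w_step n p u T (k+d) ltac:(lia)).
      destruct (tr_step n p u T (k+d) ltac:(lia)) as [E _].
      set (x := p (k+d)%nat) in *. set (y := u (k+d)%nat) in *.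
      assert (/ x <= 1). { rewrite <- Rinv_1. apply Rinv_le_contravar; lra. }
      split; [rewrite E; nra | lra]. }
  destruct (H (n - k)%nat ltac:(lia)) as [A _].
  replace (k + (n - k))%nat with n in A by lia.
  destruct T as [_ [Hn _]]. lra.
Qed.

Lemma tr_backward n p u : is_trajectory n p u -> forall k, (k < n)%nat ->
  p k < 1 -> 1 <= p k * u k -> False.
Proof.
  intros T k. induction k; intros Hk H1 H2.
  - destruct T as [H0 _]. rewrite H0 in H2. lra.
  - pose proof (tr_w_step n p u T k ltac:(lia)) as W.
    destruct (tr_step n p u T k ltac:(lia)) as [_ E].
    pose proof (tr_pos n p u T k ltac:(lia)) as P.
    assert (p k <= p (S k)).
    { rewrite E in H2. apply Rmult_le_compat_r with (r := p k) in H2; [|lra].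
      rewrite Rmult_assoc, Rinv_l in H2; lra. }
    assert (1 < / p k). { rewrite <- Rinv_1. apply Rinv_lt_contravar; lra. }
    apply IHk; [lia|lra|lra].
Qed.

Lemma tr_a n p u : is_trajectory n p u -> forall j, (j <= n)%nat -> p j * u j < 1.
Proof.
  intros T j Hj.
  destruct (Nat.eq_dec j n) as [->|Hne].
  - destruct T as [_ [Hn _]]. rewrite Hn. lra.
  - destruct (Rlt_or_le (p j * u j) 1) as [|Hw]; auto. exfalso.
    destruct (Rlt_or_le (p j) 1).
    + apply (tr_backward n p u T j); lia || lra.
    + apply (tr_forward n p u T j); lia || lra.
Qed.

Lemma tr_dec n p u : is_trajectory n p u -> forall j, (j < n)%nat -> p (S j) < p j.
Proof.
  intros T j Hj. pose proof (tr_a n p u T (S j) ltac:(lia)) as A.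
  destruct (tr_step n p u T j Hj) as [_ E]. rewrite E in A.
  pose proof (tr_pos n p u T j Hj).
  apply Rmult_lt_compat_r with (r := p j) in A; [|lra].
  rewrite Rmult_assoc, Rinv_l in A; lra.
Qed.

Lemma tr_mono n p u : is_trajectory n p u -> forall a b, (a < b)%nat -> (b <= n)%nat -> p b < p a.
Proof.
  intros T a b Hab. induction Hab; intros Hb.
  - apply (tr_dec n p u T); lia.
  - pose proof (tr_dec n p u T m ltac:(lia)). pose proof (IHHab ltac:(lia)). lra.
Qed.

Lemma tr_uniq_lt n p u q v : is_trajectory n p u -> is_trajectory n q v -> p 0%nat < q 0%nat -> False.
Proof.
  intros T S Hlt.
  assert (forall j, (j <= n)%nat -> p j < q j /\ p j * u j <= q j * v j).
  { induction j; intros Hj.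
    - destruct T as [U _]. destruct S as [V _]. rewrite U, V. split; lra.
    - destruct (IHj ltac:(lia)) as [A B].
      pose proof (tr_w_step n p u T j ltac:(lia)) as W1.
      pose proof (tr_w_step n q v S j ltac:(lia)) as W2.
      destruct (tr_step n p u T j ltac:(lia)) as [E1 _].
      destruct (tr_step n q v S j ltac:(lia)) as [E2 _].
      pose proof (tr_pos n p u T j ltac:(lia)) as P.
      pose proof (tr_u_nonneg n p u T j ltac:(lia)) as U.
      assert (0 <= p j * u j) by nra.
      assert (/ q j < / p j) by (apply Rinv_lt_contravar; nra).
      rewrite W1, W2, E1, E2.
      replace (p j ^ 2 * (u j + 1) - 1) with (p j * (p j * u j) + p j * p j - 1) by ring.
      replace (q j ^ 2 * (v j + 1) - 1) with (q j * (q j * v j) + q j * q j - 1) by ring.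
      split; [nra | lra]. }
  destruct (H n ltac:(lia)) as [A _].
  destruct T as [_ [Hp _]]. destruct S as [_ [Hq _]]. lra.
Qed.

Lemma tr_uniq n p u q v : is_trajectory n p u -> is_trajectory n q v ->
  forall j, (j <= n)%nat -> p j = q j /\ u j = v j.
Proof.
  intros T S.
  assert (E0 : p 0%nat = q 0%nat).
  { destruct (Rtotal_order (p 0%nat) (q 0%nat)) as [h|[h|h]]; auto; exfalso.
    - exact (tr_uniq_lt n p u q v T S h).
    - exact (tr_uniq_lt n q v p u S T h). }
  induction j; intros Hj.
  - split; auto. destruct T as [U _]. destruct S as [V _]. congruence.
  - destruct (IHj ltac:(lia)) as [A B].
    destruct (tr_step n p u T j ltac:(lia)) as [E1 F1].
    destruct (tr_step n q v S j ltac:(lia)) as [E2 F2].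
    rewrite E1, E2, F1, F2, A, B. split; reflexivity.
Qed.

Lemma tr_sym n p u : (1 <= n)%nat -> is_trajectory n p u ->
  is_trajectory n (fun j => u (n - j)%nat) (fun j => p (n - j)%nat).
Proof.
  intros Hn1 T. split; [|split; [|split]].
  - rewrite Nat.sub_0_r. destruct T as [_ [H _]]. exact H.
  - rewrite Nat.sub_diag. destruct T as [H _]. exact H.
  - intros j Hj. destruct (tr_step n p u T (n - S j) ltac:(lia)) as [_ F].
    replace (n - j)%nat with (S (n - S j)) by lia. rewrite F.
    apply Rinv_0_lt_compat, (tr_pos n p u T); lia.
  - intros j Hj. cbv beta.
    replace (n - (j - 1))%nat with (S (n - j)) by lia.
    destruct (tr_step n p u T (n - j) ltac:(lia)) as [E F].
    pose proof (tr_pos n p u T (n - j) ltac:(lia)) as P.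
    unfold Phi. rewrite E, F. f_equal.
    + field. lra.
    + rewrite Rinv_inv. reflexivity.
Qed.

Theorem lemma5 (n : nat) (p u : nat -> R) :
  (1 <= n)%nat ->
  is_trajectory n p u ->
  (forall j : nat, (j <= n)%nat -> p j * u j < 1) /\
  (forall j : nat, (2 * j + 1 <= n)%nat -> 1 <= p j) /\
  (forall j : nat, (n + 1 <= 2 * j)%nat -> (j <= n)%nat -> 1 <= u j) /\
  (forall j : nat, (2 * j <= n)%nat -> u j < 1) /\
  (forall j : nat, (n <= 2 * j)%nat -> (j <= n)%nat -> p j < 1).
Proof.
  intros Hn1 T.
  pose proof (tr_uniq n p u _ _ T (tr_sym n p u Hn1 T)) as Sy.
  cbv beta in Sy.
  assert (Pinv : forall j, (j < n)%nat -> p j = / p (n - 1 - j)%nat).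
  { intros j Hj. destruct (Sy j ltac:(lia)) as [A _]. rewrite A.
    destruct (tr_step n p u T (n - 1 - j) ltac:(lia)) as [_ F].
    replace (n - j)%nat with (S (n - 1 - j)) by lia. exact F. }
  split; [|split; [|split; [|split]]].
  - exact (tr_a n p u T).
  - intros j Hj. pose proof (Pinv j ltac:(lia)) as E.
    pose proof (tr_pos n p u T j ltac:(lia)) as P.
    pose proof (tr_pos n p u T (n - 1 - j) ltac:(lia)) as Q.
    assert (p (n - 1 - j)%nat <= p j).
    { destruct (Nat.eq_dec (n - 1 - j) j) as [e|ne]; [rewrite e; lra|].
      left; apply (tr_mono n p u T); lia. }
    assert (p j * p (n-1-j)%nat = 1) by (rewrite E; field; lra).
    nra.
  - intros j Hj Hjn. destruct (Sy j Hjn) as [_ A].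
    destruct (tr_step n p u T (j - 1) ltac:(lia)) as [_ F].
    replace (S (j - 1)) with j in F by lia.
    pose proof (tr_pos n p u T (j - 1) ltac:(lia)) as P.
    assert (p (n - j)%nat >= p (j - 1)%nat).
    { destruct (Nat.eq_dec (n - j) (j - 1)) as [e|ne]; [rewrite e; lra|].
      left; apply (tr_mono n p u T); lia. }
    assert (u j * p (j - 1)%nat = 1) by (rewrite F; field; lra).
    nra.
  - intros j Hj. destruct j.
    + destruct T as [H0 _]. rewrite H0; lra.
    + destruct (Sy (S j) ltac:(lia)) as [_ A].
      destruct (tr_step n p u T j ltac:(lia)) as [_ F].
      pose proof (tr_pos n p u T j ltac:(lia)) as P.
      assert (p (n - S j)%nat < p j) by (apply (tr_mono n p u T); lia).
      assert (0 <= p (n - S j)%nat).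
      { destruct (Nat.eq_dec (n - S j) n) as [e|ne].
        - rewrite e. destruct T as [_ [Hn _]]. lra.
        - left; apply (tr_pos n p u T); lia. }
      assert (u (S j) * p j = 1) by (rewrite F; field; lra).
      nra.
  - intros j Hj Hjn. destruct (Nat.eq_dec j n) as [->|ne].
    + destruct T as [_ [Hn _]]. lra.
    + pose proof (Pinv j ltac:(lia)) as E.
      pose proof (tr_pos n p u T j ltac:(lia)) as P.
      pose proof (tr_pos n p u T (n - 1 - j) ltac:(lia)) as Q.
      assert (p j < p (n - 1 - j)%nat) by (apply (tr_mono n p u T); lia).
      assert (p j * p (n-1-j)%nat = 1) by (rewrite E; field; lra).
      nra.
Qed.
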